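(* Consider the self-attention dynamics with LayerNorm $X^{(t+1)}=D^{(t)}A^{(t)}X^{(t)}W_V^{(t)}$, where $\mathcal{G}$ is strongly connected, \textbf{A1} and \textbf{A2} hold, every $W_V^{(t)}\in\mathbb{R}^{d\times d}$ is orthogonal, and the initial input $X^{(0)}$ has rows in $\mathbb{S}^{d-1}$, $N\le d$, and full rank $N$. Then there exist constants $C_1,C_2>0$ such that $C_1\le D^{(t)}_{i,i}\le C_2$ for all $t\ge0$ and all $i\in[N]$.
   Context: Tokens are the rows of $X\in\mathbb{R}^{N\times d}$. Attention mask: directed graph $\mathcal{G}$ on $[N]$, $(j,i)\in E(\mathcal{G})$ meaning token $i$ attends to token $j$; $\mathcal{N}_i=\{k:(k,i)\in E(\mathcal{G})\}$. Masked softmax: $\mathrm{softmax}_{\mathcal{G}}(R)_{ij}=\exp(R_{ij})/\sum_{k\in\mathcal{N}_i}\exp(R_{ik})$ if $(j,i)\in E(\mathcal{G})$, else $0$. $A^{(t)}=\mathrm{softmax}_{\mathcal{G}}\big(X^{(t)}W_Q^{(t)}(X^{(t)}W_K^{(t)})^\top/\sqrt{d_{QK}}\big)$, $D^{(t)}=\mathrm{diag}(d_1,\dots,d_N)$ with $d_i=1/\|(A^{(t)}X^{(t)}W_V^{(t)})_{i,:}\|_2$. \textbf{A1}: $(i,i)\in E(\mathcal{G})$ for all $i$. \textbf{A2}: $\sup_t\max\{\|W_Q^{(t)}\|_2,\|W_K^{(t)}\|_2\}<\infty$. Strongly connected: any two distinct nodes are mutually reachable by directed paths. *)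

(* Defs.v *)
From HB Require Import structures.
From mathcomp Require Import all_boot all_order all_algebra.
From mathcomp Require Import all_classical all_reals all_analysis.
Set Implicit Arguments. Unset Strict Implicit. Unset Printing Implicit Defensive.
Import Order.TTheory GRing.Theory Num.Theory.
Local Open Scope ring_scope.

Section Defs.
Variable R : realType.

Definition vnorm n (v : 'rV[R]_n) : R := Num.sqrt (\sum_(j < n) v 0 j ^+ 2).

Definition opnorm_le m n (W : 'M[R]_(m, n)) (B : R) : Prop :=
  forall x : 'rV[R]_m, vnorm (x *m W) <= B * vnorm x.

Definition orthogonal_mx n (W : 'M[R]_n) : Prop := W *m W^T = 1%:M.

(* G j i  means (j,i) is an edge: token i attends to token j *)
Definition masked_softmax N (G : rel 'I_N) (M : 'M[R]_N) : 'M[R]_N :=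
  \matrix_(i, j) (if G j i
                  then expR (M i j) / \sum_(k < N | G k i) expR (M i k)
                  else 0).

Definition attn N d dqk (G : rel 'I_N) (X : 'M[R]_(N, d))
  (WQ WK : 'M[R]_(d, dqk)) : 'M[R]_N :=
  masked_softmax G ((Num.sqrt (dqk%:R))^-1 *: ((X *m WQ) *m (X *m WK)^T)).

Definition lnD N d dqk (G : rel 'I_N) (X : 'M[R]_(N, d))
  (WQ WK : 'M[R]_(d, dqk)) (WV : 'M[R]_d) : 'M[R]_N :=
  diag_mx (\row_i (vnorm (row i (attn G X WQ WK *m X *m WV)))^-1).

Definition strongly_connected N (G : rel 'I_N) : Prop :=
  forall i j : 'I_N, i != j -> connect G i j /\ connect G j i.

End Defs.

(* Main.v *)
Require Import Defs.
From HB Require Import structures.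
From mathcomp Require Import all_boot all_order all_algebra.
From mathcomp Require Import all_classical all_reals all_analysis.
From mathcomp Require Import ring lra.
Import Order.TTheory GRing.Theory Num.Theory.
Set Implicit Arguments. Unset Strict Implicit. Unset Printing Implicit Defensive.
Local Open Scope ring_scope.

Section Aux.
Variable R : realType.

Definition dot n (u v : 'rV[R]_n) : R := \sum_j u 0 j * v 0 j.

Lemma dot_ge0 n (u : 'rV[R]_n) : 0 <= dot u u.
Proof. by apply: sumr_ge0 => j _; rewrite -expr2 sqr_ge0. Qed.

Lemma vnormE n (u : 'rV[R]_n) : vnorm u = Num.sqrt (dot u u).
Proof. by rewrite /vnorm /dot; under eq_bigr do rewrite expr2. Qed.

Lemma vnorm_ge0 n (u : 'rV[R]_n) : 0 <= vnorm u.
Proof. by rewrite vnormE sqrtr_ge0. Qed.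

Lemma vnorm_sq n (u : 'rV[R]_n) : vnorm u ^+ 2 = dot u u.
Proof. by rewrite vnormE sqr_sqrtr // dot_ge0. Qed.

Lemma dotC n (u v : 'rV[R]_n) : dot u v = dot v u.
Proof. by apply: eq_bigr => j _; rewrite mulrC. Qed.

Lemma dot_mx n (u v : 'rV[R]_n) : dot u v = (u *m v^T) 0 0.
Proof. by rewrite mxE; apply: eq_bigr => j _; rewrite mxE. Qed.

Lemma dot_orth n (W : 'M[R]_n) (u v : 'rV[R]_n) : W *m W^T = 1%:M ->
  dot (u *m W) (v *m W) = dot u v.
Proof.
by move=> H; rewrite !dot_mx trmx_mul mulmxA -(mulmxA u) H mulmx1.
Qed.

Lemma vnorm_orth n (W : 'M[R]_n) (u : 'rV[R]_n) : W *m W^T = 1%:M ->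
  vnorm (u *m W) = vnorm u.
Proof. by move=> H; rewrite !vnormE dot_orth. Qed.

Lemma dot_sum N d (A : 'M[R]_N) (X : 'M[R]_(N, d)) i v :
  dot (row i (A *m X)) v = \sum_j A i j * dot (row j X) v.
Proof.
rewrite /dot; under eq_bigr do rewrite !mxE big_distrl /=.
rewrite exchange_big /=; apply: eq_bigr => j _; rewrite big_distrr /=.
by apply: eq_bigr => k _; rewrite !mxE -mulrA.
Qed.

Lemma dotZ n (c : R) (u v : 'rV[R]_n) : dot (c *: u) v = c * dot u v.
Proof. by rewrite /dot big_distrr; apply: eq_bigr => j _; rewrite mxE -mulrA. Qed.

Lemma vnormZ n (c : R) (u : 'rV[R]_n) : vnorm (c *: u) = `|c| * vnorm u.
Proof.
rewrite !vnormE dotZ dotC dotZ mulrA -expr2 sqrtrM ?sqr_ge0 //.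
by rewrite sqrtr_sqr.
Qed.

Lemma CS n (u v : 'rV[R]_n) : dot u v <= vnorm u * vnorm v.
Proof.
set a := vnorm v; set b := vnorm u.
have H : 0 <= \sum_j (a * u 0 j - b * v 0 j) ^+ 2.
  by apply: sumr_ge0 => j _; rewrite sqr_ge0.
have E : \sum_j (a * u 0 j - b * v 0 j) ^+ 2 =
   a ^+ 2 * dot u u - 2 * a * b * dot u v + b ^+ 2 * dot v v.
  rewrite /dot !big_distrr -sumrB -big_split /=.
  by apply: eq_bigr => j _; ring.
rewrite E -(vnorm_sq u) -(vnorm_sq v) -/a -/b in H.
have a0 : 0 <= a by apply: vnorm_ge0.
have b0 : 0 <= b by apply: vnorm_ge0.
have [ab0|] := ltP 0 (a * b).
  nra.
rewrite le_eqVlt => /orP [/eqP ab|ab]; last by exfalso; nra.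
have : a = 0 \/ b = 0.
  by move: ab => /eqP; rewrite mulf_eq0 => /orP [/eqP ->|/eqP ->]; auto.
have zero : forall w : 'rV[R]_n, vnorm w = 0 -> forall j, w 0 j = 0.
  move=> w; rewrite vnormE => /eqP; rewrite sqrtr_eq0 => Hw j.
  have Hd : dot w w = 0 by apply/eqP; rewrite eq_le Hw dot_ge0.
  have Hs : \sum_j (w 0 j) ^+ 2 = 0.
    rewrite -[RHS]Hd /dot; by apply: eq_bigr => k _; rewrite expr2.
  have := psumr_eq0P (P := predT) (fun k _ => sqr_ge0 (w 0 k)) Hs (i := j) isT.
  by move/eqP; rewrite sqrf_eq0 => /eqP.
case=> [/zero Hv|/zero Hu]; rewrite /dot big1 ?mulr_ge0 //.
  by move=> j _; rewrite Hv mulr0.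
by move=> j _; rewrite Hu mul0r.
Qed.


Lemma sm_ge0 N (G : rel 'I_N) (M : 'M[R]_N) i j : 0 <= masked_softmax G M i j.
Proof.
rewrite mxE; case: (G j i) => //.
by apply: divr_ge0; [exact: expR_ge0 | apply: sumr_ge0 => k _; exact: expR_ge0].
Qed.

Lemma sm_sum N (G : rel 'I_N) (M : 'M[R]_N) i : G i i ->
  \sum_j masked_softmax G M i j = 1.
Proof.
move=> Gii.
have Zpos : 0 < \sum_(k < N | G k i) expR (M i k).
  rewrite (bigD1 i) //=; apply: lt_le_trans (expR_gt0 (M i i)) _.
  rewrite lerDl; apply: sumr_ge0 => k _; exact: expR_ge0.
under eq_bigr do rewrite mxE.
rewrite -big_mkcond /= -big_distrl /= divff //.
by rewrite gt_eqF.
Qed.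

Lemma step N d (A : 'M[R]_N) (X : 'M[R]_(N, d)) (y : 'rV[R]_d) i :
  (forall i j, 0 <= A i j) -> (forall i, \sum_j A i j = 1) ->
  (forall j, vnorm (row j X) = 1) -> (forall j, 1 <= dot (row j X) y) ->
  1 <= dot (row i (A *m X)) y /\ vnorm (row i (A *m X)) <= 1 /\ 1 <= vnorm (row i (A *m X)) * vnorm y.
Proof.
move=> A0 A1 Xn Xy.
set w := row i (A *m X).
have Hy : 1 <= dot w y.
  rewrite dot_sum -(A1 i); apply: ler_sum => j _.
  by rewrite -{1}(mulr1 (A i j)); apply: ler_wpM2l.
have Hw : vnorm w <= 1.
  have : vnorm w ^+ 2 <= vnorm w.
    rewrite vnorm_sq {1}/w dot_sum.
    apply: (@le_trans _ _ (\sum_j A i j * vnorm w)).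
      apply: ler_sum => j _; apply: ler_wpM2l => //.
      by apply: le_trans (CS _ _) _; rewrite Xn mul1r.
    by rewrite -big_distrl /= A1 mul1r.
  have := vnorm_ge0 w; nra.
split; first by []. split; first by [].
exact: le_trans Hy (CS _ _).
Qed.

Lemma lnD_ii N d dqk (G : rel 'I_N) (X : 'M[R]_(N, d))
  (WQ WK : 'M[R]_(d, dqk)) (W : 'M[R]_d) i :
  lnD G X WQ WK W i i = (vnorm (row i (attn G X WQ WK *m X) *m W))^-1.
Proof. by rewrite /lnD mxE eqxx mulr1n mxE row_mul. Qed.

Lemma row_lnD N d dqk (G : rel 'I_N) (X : 'M[R]_(N, d))
  (WQ WK : 'M[R]_(d, dqk)) (W : 'M[R]_d) i :
  row i (lnD G X WQ WK W *m attn G X WQ WK *m X *m W) =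
  (vnorm (row i (attn G X WQ WK *m X) *m W))^-1 *:
     (row i (attn G X WQ WK *m X) *m W).
Proof.
rewrite -!row_mul -!mulmxA (mulmxA (attn G X WQ WK)).
set M := attn G X WQ WK *m X *m W.
by rewrite /lnD mul_diag_mx; apply/rowP => k; rewrite !mxE.
Qed.

End Aux.

Theorem mainTheorem6 (R : realType) (N d dqk : nat) (G : rel 'I_N)
  (X : nat -> 'M[R]_(N, d)) (WQ WK : nat -> 'M[R]_(d, dqk))
  (WV : nat -> 'M[R]_d) :
  (0 < dqk)%N ->
  strongly_connected G ->
  (forall i, G i i) ->
  (exists B : R, forall t, opnorm_le (WQ t) B /\ opnorm_le (WK t) B) ->
  (forall t, orthogonal_mx (WV t)) ->
  (forall t, X t.+1 =
     lnD G (X t) (WQ t) (WK t) (WV t) *m attn G (X t) (WQ t) (WK t)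
       *m X t *m WV t) ->
  (forall i, vnorm (row i (X 0%N)) = 1) ->
  (N <= d)%N ->
  \rank (X 0%N) = N ->
  exists C1 C2 : R, 0 < C1 /\ 0 < C2 /\
    forall (t : nat) (i : 'I_N),
      C1 <= lnD G (X t) (WQ t) (WK t) (WV t) i i <= C2.
Proof.
move=> _ _ Gii _ HW HX H0 _ Hrank.
have : row_free (X 0%N) by rewrite /row_free Hrank.
case/row_freeP => Y HY.
pose y0 : 'rV[R]_d := (Y *m (const_mx 1 : 'M[R]_(N, 1)))^T.
pose y := fix f (t : nat) : 'rV[R]_d :=
  match t with 0%N => y0 | t'.+1 => f t' *m WV t' end.
have A0 : forall t i j, 0 <= attn G (X t) (WQ t) (WK t) i j.
  by move=> t i j; apply: sm_ge0.
have A1 : forall t i, \sum_j attn G (X t) (WQ t) (WK t) i j = 1.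
  by move=> t i; apply: sm_sum.
have Inv : forall t, (forall i, vnorm (row i (X t)) = 1) /\
   (forall i, 1 <= dot (row i (X t)) (y t)) /\ vnorm (y t) = vnorm y0.
  elim => [|t [IH1 [IH2 IH3]]].
    split => //; split => // i.
    rewrite dot_mx /y /y0 trmxK -row_mul mulmxA HY mul1mx !mxE.
    by [].
  have Wt : WV t *m (WV t)^T = 1%:M := HW t.
  have S := fun i => step i (A0 t) (A1 t) IH1 IH2.
  have pos : forall i, 0 < vnorm (row i (attn G (X t) (WQ t) (WK t) *m X t)).
    move=> i; have [_ [_ S3]] := S i.
    have := vnorm_ge0 (y t); have := vnorm_ge0 (row i (attn G (X t) (WQ t) (WK t) *m X t)).
    nra.
  split; [|split].
  - move=> i; rewrite HX row_lnD vnormZ !vnorm_orth //.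
    rewrite ger0_norm ?invr_ge0 ?vnorm_ge0 // mulVf //.
    by rewrite gt_eqF // pos.
  - move=> i; rewrite HX row_lnD /= dotZ dot_orth // vnorm_orth //.
    have [S1 [S2 _]] := S i.
    have P := pos i.
    set v := vnorm _ in S2 P *.
    have : 1 <= v^-1 by rewrite invf_ge1.
    nra.
  - by rewrite /= vnorm_orth.
exists 1, (vnorm y0 + 1).
split; first exact: ltr01.
split; first by have := vnorm_ge0 y0; lra.
move=> t i; have Wt : WV t *m (WV t)^T = 1%:M := HW t.
rewrite lnD_ii vnorm_orth //.
have [I1 [I2 I3]] := Inv t.
have [S1 [S2 S3]] := step i (A0 t) (A1 t) I1 I2.
rewrite I3 in S3.
set v := vnorm _ in S2 S3 *.
have v0 : 0 <= v by apply: vnorm_ge0.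
have c0 := vnorm_ge0 y0.
have vp : 0 < v by nra.
have vi : v * v^-1 = 1 by rewrite mulfV // gt_eqF.
have vi0 : 0 <= v^-1 by rewrite invr_ge0.
set u := v^-1 in vi vi0 *.
apply/andP; split; nra.
Qed.
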